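(* Let $n, m \ge 1$. Let $F \in \mathbb{R}^{n\times n}$ (state transition matrix) and $H \in \mathbb{R}^{m\times n}$ (measurement matrix) be known, with $H$ of full row rank $m$, and let $Q \in \mathbb{R}^{n\times n}$ and $R \in \mathbb{R}^{m\times m}$ (process and measurement noise covariances) be known symmetric positive definite matrices. Let $\tilde{x}_{t-1} \in \mathbb{R}^n$ and a symmetric positive semidefinite $\tilde{P}_{t-1} \in \mathbb{R}^{n\times n}$ be the previous state estimate and covariance. Define the Kalman prediction $$\hat{x}_t = F\tilde{x}_{t-1}, \qquad \hat{P}_t = F\tilde{P}_{t-1}F^T + Q,$$ and, for an observed measurement $\hat{z}_t \in \mathbb{R}^m$, the Kalman update $$K_t = \hat{P}_t H^T (H\hat{P}_t H^T + R)^{-1}, \qquad \tilde{x}_t = \hat{x}_t + K_t(\hat{z}_t - H\hat{x}_t), \qquad \tilde{P}_t = (I - K_t H)\hat{P}_t .$$ Consider the a-priori distribution $\mathcal{N}(\hat{x}_t, \hat{P}_t)$ and the a-posteriori distribution $\mathcal{N}(\tilde{x}_t, \tilde{P}_t)$ on $\mathbb{R}^n$, and the function $$D(\hat{z}_t) = D_{KL}\big(\mathcal{N}(\hat{x}_t,\hat{P}_t)\,\|\,\mathcal{N}(\tilde{x}_t,\tilde{P}_t)\big).$$ Then minimizing the residual $\|\hat{z}_t - H\hat{x}_t\|_2$ over $\hat{z}_t \in \mathbb{R}^m$ is equivalent to minimizing $D(\hat{z}_t)$ over $\hat{z}_t \in \mathbb{R}^m$; that is, the set of minimizers of $\hat{z}_t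 \mapsto \|\hat{z}_t - H\hat{x}_t\|_2$ coincides with the set of minimizers of $\hat{z}_t \mapsto D(\hat{z}_t)$.
   Context: $D_{KL}(p\|q) = \mathbb{E}_{p}[\log p - \log q]$ denotes the Kullback–Leibler divergence; for Gaussians on $\mathbb{R}^n$, $D_{KL}(\mathcal{N}(\mu_0,\Sigma_0)\|\mathcal{N}(\mu_1,\Sigma_1)) = \tfrac12\big(\log\frac{\det\Sigma_1}{\det\Sigma_0} - n + \mathrm{tr}(\Sigma_1^{-1}\Sigma_0) + (\mu_1-\mu_0)^T\Sigma_1^{-1}(\mu_1-\mu_0)\big)$. The setting is the linear Kalman filter model $x_t = Fx_{t-1} + \omega$, $\omega \sim \mathcal{N}(0,Q)$, $z_t = Hx_t + \nu$, $\nu \sim \mathcal{N}(0,R)$. *)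

(* Defs.v *)
From HB Require Import structures.
From mathcomp Require Import all_boot all_order all_algebra.
From mathcomp Require Import all_classical all_reals all_analysis.
Set Implicit Arguments. Unset Strict Implicit. Unset Printing Implicit Defensive.
Import Order.TTheory GRing.Theory Num.Theory.
Local Open Scope ring_scope.

Definition sym_posdef {R : realType} (n : nat) (A : 'M[R]_n) : Prop :=
  A^T = A /\ forall v : 'cV[R]_n, v != 0 -> 0 < (v^T *m A *m v) 0 0.

Definition sym_psd {R : realType} (n : nat) (A : 'M[R]_n) : Prop :=
  A^T = A /\ forall v : 'cV[R]_n, 0 <= (v^T *m A *m v) 0 0.

Definition norm2 {R : realType} (k : nat) (v : 'cV[R]_k) : R :=
  Num.sqrt (\sum_(i < k) v i 0 ^+ 2).

(* KL divergence D_KL(N(mu0,S0) || N(mu1,S1)) on R^n, by the closed-form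
   Gaussian formula given in the paper's context. *)
Definition gauss_KL {R : realType} (n : nat) (mu0 : 'cV[R]_n) (S0 : 'M[R]_n)
    (mu1 : 'cV[R]_n) (S1 : 'M[R]_n) : R :=
  (ln (\det S1 / \det S0) - n%:R + \tr (invmx S1 *m S0)
    + ((mu1 - mu0)^T *m invmx S1 *m (mu1 - mu0)) 0 0) / 2.

Definition kf_xhat {R : realType} n (F : 'M[R]_n) (x : 'cV[R]_n) : 'cV[R]_n := F *m x.
Definition kf_Phat {R : realType} n (F Q P : 'M[R]_n) : 'M[R]_n := F *m P *m F^T + Q.
Definition kf_gain {R : realType} n m (H : 'M[R]_(m, n)) (Rm : 'M[R]_m)
    (Ph : 'M[R]_n) : 'M[R]_(n, m) :=
  Ph *m H^T *m invmx (H *m Ph *m H^T + Rm).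
Definition kf_xtil {R : realType} n m (H : 'M[R]_(m, n)) (K : 'M[R]_(n, m))
    (xh : 'cV[R]_n) (z : 'cV[R]_m) : 'cV[R]_n :=
  xh + K *m (z - H *m xh).
Definition kf_Ptil {R : realType} n m (H : 'M[R]_(m, n)) (K : 'M[R]_(n, m))
    (Ph : 'M[R]_n) : 'M[R]_n :=
  (1%:M - K *m H) *m Ph.

(* Main.v *)
Require Import Defs.
From HB Require Import structures.
From mathcomp Require Import all_boot all_order all_algebra.
From mathcomp Require Import all_classical all_reals all_analysis.
Import Order.TTheory GRing.Theory Num.Theory.
Local Open Scope ring_scope.

Section Aux.
Variable R : realType.
Set Implicit Arguments.

Lemma quad_sandwich k l (C : 'M[R]_(k, l)) (B : 'M[R]_l) (v : 'cV[R]_k) :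
  v^T *m (C *m B *m C^T) *m v = (C^T *m v)^T *m B *m (C^T *m v).
Proof. by rewrite trmx_mul trmxK !mulmxA. Qed.

Lemma pd_ge0 k (A : 'M[R]_k) : sym_posdef A -> forall v : 'cV[R]_k, 0 <= (v^T *m A *m v) 0 0.
Proof.
move=> [_ hA] v; have [->|nv] := eqVneq v 0.
  by rewrite mulmx0 mxE.
exact/ltW/hA.
Qed.

Lemma pd_unit k (A : 'M[R]_k) : sym_posdef A -> A \in unitmx.
Proof.
move=> [sA hA]; rewrite unitmxE unitfE; apply/negP => /det0P [v nv vA].
have nv' : v^T != 0 by apply: contra nv => /eqP h; rewrite -(trmxK v) h trmx0.
have := hA _ nv'; rewrite trmxK vA mul0mx mxE ltxx //.
Qed.

Lemma inv_sym k (A : 'M[R]_k) : A^T = A -> (invmx A)^T = invmx A.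
Proof. by move=> sA; rewrite trmx_inv sA. Qed.

Lemma pd_inv_ge0 k (A : 'M[R]_k) : sym_posdef A -> forall y : 'cV[R]_k,
  0 <= (y^T *m invmx A *m y) 0 0.
Proof.
move=> hA y; have uA := pd_unit hA.
have -> : y^T *m invmx A *m y = (invmx A *m y)^T *m A *m (invmx A *m y).
  rewrite trmx_mul (@inv_sym _ A); last by case: hA.
  by rewrite !mulmxA mulmxKV.
exact: pd_ge0.
Qed.

Lemma norm2_le0 k (v : 'cV[R]_k) : norm2 v <= 0 -> v = 0.
Proof.
rewrite /norm2 => h.
have : Num.sqrt (\sum_(i < k) v i 0 ^+ 2) == 0.
  by rewrite eq_le h sqrtr_ge0.
rewrite sqrtr_eq0 => hs.
have hs0 : \sum_(i < k) v i 0 ^+ 2 = 0.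
  by apply/eqP; rewrite eq_le hs sumr_ge0 // => i _; rewrite sqr_ge0.
apply/matrixP => i j; rewrite ord1 mxE.
have := psumr_eq0P (fun i _ => sqr_ge0 (v i 0)) hs0 (i := i) isT.
by move/eqP; rewrite sqrf_eq0 => /eqP.
Qed.

Lemma norm2_0 k : norm2 (0 : 'cV[R]_k) = 0.
Proof. by rewrite /norm2 big1 ?sqrtr0 // => i _; rewrite mxE expr0n. Qed.

End Aux.
From mathcomp Require Import lra.

Theorem theorem1 (R : realType) (n m : nat) (hn : (0 < n)%N) (hm : (0 < m)%N)
    (F : 'M[R]_n) (H : 'M[R]_(m, n)) (Q : 'M[R]_n) (Rm : 'M[R]_m)
    (x_prev : 'cV[R]_n) (P_prev : 'M[R]_n)
    (hH : \rank H = m) (hQ : sym_posdef Q) (hR : sym_posdef Rm)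
    (hP : sym_psd P_prev) :
  let xh := kf_xhat F x_prev in
  let Ph := kf_Phat F Q P_prev in
  let K := kf_gain H Rm Ph in
  let D := fun z : 'cV[R]_m => gauss_KL xh Ph (kf_xtil H K xh z) (kf_Ptil H K Ph) in
  forall z : 'cV[R]_m,
    (forall z' : 'cV[R]_m, norm2 (z - H *m xh) <= norm2 (z' - H *m xh)) <->
    (forall z' : 'cV[R]_m, D z <= D z').
Proof.
move=> xh Ph K D z.
have sPh : Ph^T = Ph.
  rewrite /Ph /kf_Phat raddfD /=.
  rewrite !trmx_mul trmxK (proj1 hP) (proj1 hQ).
  by rewrite mulmxA.
have pdPh : sym_posdef Ph.
  split=> // v nv; rewrite /Ph /kf_Phat mulmxDr mulmxDl mxE quad_sandwich.
  apply: ltr_wpDl; first exact: (proj2 hP).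
  exact: (proj2 hQ).
clearbody Ph.
pose A : 'M[R]_m := H *m Ph *m H^T.
pose S : 'M[R]_m := A + Rm.
have sA : A^T = A by rewrite /A !trmx_mul trmxK sPh mulmxA.
have sS : S^T = S.
  by rewrite /S raddfD /=; congr (_ + _); [exact: sA | exact: (proj1 hR)].
have pdS : sym_posdef S.
  split=> // v nv; rewrite /S mulmxDr mulmxDl mxE /A quad_sandwich.
  apply: ltr_wpDl; first exact: pd_ge0.
  exact: (proj2 hR).
have uS := pd_unit pdS.
have uR := pd_unit hR.
have uPh := pd_unit pdPh.
pose Ri := invmx Rm.
pose Pt := kf_Ptil H K Ph.
have KS : K *m S = Ph *m H^T by rewrite /K /kf_gain mulmxKV.
have KA : K *m H *m Ph *m H^T = Ph *m H^T - K *m Rm.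
  by rewrite -KS /S [in RHS]mulmxDr addrK /A !mulmxA.
have key1 : Pt *m (H^T *m Ri) = K.
  rewrite /Pt /kf_Ptil -mulmxA mulmxBl mul1mx !mulmxA KA mulmxBl /Ri mulmxK //.
  by rewrite opprB addrC subrK.
have uPt : Pt \in unitmx.
  suff h : Pt *m (invmx Ph + H^T *m Ri *m H) = 1%:M by case: (mulmx1_unit h).
  rewrite mulmxDr mulmxA key1 /Pt /kf_Ptil -mulmxA mulmxV // mulmx1.
  by rewrite subrK.
have iPtK : invmx Pt *m K = H^T *m Ri by rewrite -key1 mulKmx.
pose q (r : 'cV[R]_m) := ((K *m r)^T *m invmx Pt *m (K *m r)) 0 0.
have tK : K^T = invmx S *m H *m Ph.
  by rewrite /K /kf_gain !trmx_mul trmxK sPh inv_sym // mulmxA.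
have qform : forall u : 'cV[R]_m, (K *m (S *m u))^T *m invmx Pt *m (K *m (S *m u))
   = (A *m u)^T *m Ri *m (A *m u) + (H^T *m u)^T *m Ph *m (H^T *m u).
  move=> u.
  have e1 : K *m (S *m u) = Ph *m H^T *m u by rewrite mulmxA KS.
  have e2 : invmx Pt *m (K *m (S *m u)) = H^T *m Ri *m (S *m u)
    by rewrite -iPtK !mulmxA.
  rewrite -mulmxA e2 e1 !trmx_mul trmxK sPh.
  rewrite /S /A mulmxDl !mulmxDr !mulmxA /Ri mulmxKV //.
have qS : forall u, q (S *m u) = ((A *m u)^T *m Ri *m (A *m u)) 0 0
    + ((H^T *m u)^T *m Ph *m (H^T *m u)) 0 0.
  by move=> u; rewrite /q qform mxE.
have qge0 : forall r, 0 <= q r.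
  move=> r; rewrite -(mulKVmx uS r) qS; apply: addr_ge0.
    exact: pd_inv_ge0.
  exact: pd_ge0.
have qeq0 : forall r, q r = 0 -> r = 0.
  move=> r; rewrite -{1}(mulKVmx uS r) qS => h; rewrite -(mulKVmx uS r).
  move: h; move: (invmx S *m r) => u h.
  have h2 : ((H^T *m u)^T *m Ph *m (H^T *m u)) 0 0 = 0.
    move/eqP: h; rewrite paddr_eq0; first by case/andP => _ /eqP.
      exact: pd_inv_ge0.
    exact: pd_ge0.
  have hHu : H^T *m u = 0.
    apply/eqP; apply: contraT => nz; have := (proj2 pdPh) _ nz.
    by rewrite h2 ltxx.
  have : u^T *m H = 0 by rewrite -(trmxK (u^T *m H)) trmx_mul trmxK hHu trmx0.
  move/eqP; rewrite mulmx_free_eq0; last by rewrite /row_free hH.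
  move/eqP => h3; have -> : u = 0 by rewrite -(trmxK u) h3 trmx0.
  by rewrite mulmx0.
have q0 : q 0 = 0 by rewrite /q mulmx0 trmx0 !mul0mx mxE.
have hD : forall z1 z2, D z1 - D z2 = (q (z1 - H *m xh) - q (z2 - H *m xh)) / 2.
  move=> z1 z2; rewrite /D /gauss_KL /kf_xtil !(addrC xh) !addrK /q -/Pt.
  lra.
split.
- move=> h z'.
  have r0 : z - H *m xh = 0.
    by apply: norm2_le0; have := h (H *m xh); rewrite subrr norm2_0.
  have := hD z z'; rewrite r0 q0; have := qge0 (z' - H *m xh).
  lra.
- move=> h z'.
  have := h (H *m xh); have := hD z (H *m xh); rewrite subrr q0 => e le.
  have := qge0 (z - H *m xh) => g.
  have hq : q (z - H *m xh) = 0 by lra.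
  by rewrite (qeq0 _ hq) norm2_0 /norm2 sqrtr_ge0.
Qed.
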